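(* For any probabilistic single-item auction, the maximum expected revenue over all mixed signaling schemes is at least $\mathcal{B}/2$, where $\mathcal{B}=\min_{i'}\sum_{j=1}^m\max_{i\ne i'}\psi_{i,j}$.
   Context: A probabilistic single-item auction: $n\ge 2$ bidders, $m$ item types with probabilities $p_j$, nonnegative valuations $v_{i,j}$; $\psi_{i,j}=p_jv_{i,j}$. After observing the type, the auctioneer broadcasts a signal; bidders bid their conditional expected valuations in a second-price auction. A mixed signaling scheme is a finite signal set $\mathcal{S}$ and $\varphi:[m]\times\mathcal{S}\to[0,1]$ with $\sum_S\varphi(j,S)=1$ for each $j$. Its expected revenue is $\sum_{S\in\mathcal{S}}\mathrm{max2}_i\{\sum_j\psi_{i,j}\varphi(j,S)\}$, where $\mathrm{max2}$ is the second-largest entry of a list (with multiplicity). *)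

(* Defs.v *)
From mathcomp Require Import all_boot all_order all_algebra.
Set Implicit Arguments. Unset Strict Implicit. Unset Printing Implicit Defensive.
Import Order.TTheory GRing.Theory Num.Theory.
Local Open Scope ring_scope.

Definition max2 (R : realDomainType) (n : nat) (f : 'I_n -> R) : R :=
  nth 0 (sort (fun x y : R => y <= x) [seq f i | i <- enum 'I_n]) 1.

Definition psi (R : realDomainType) (n m : nat) (p : 'I_m -> R)
  (v : 'I_n -> 'I_m -> R) (i : 'I_n) (j : 'I_m) : R := p j * v i j.

Definition is_scheme (R : realDomainType) (m k : nat) (phi : 'I_m -> 'I_k -> R) : Prop :=
  (forall j s, 0 <= phi j s <= 1) /\ (forall j, \sum_(s < k) phi j s = 1).

Definition revenue (R : realDomainType) (n m k : nat) (p : 'I_m -> R)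
  (v : 'I_n -> 'I_m -> R) (phi : 'I_m -> 'I_k -> R) : R :=
  \sum_(s < k) max2 (fun i => \sum_(j < m) psi p v i j * phi j s).

Definition minlist (R : realDomainType) (l : seq R) : R :=
  \big[Num.min/head 0 l]_(x <- l) x.

(* B = min_{i'} sum_j max_{i <> i'} psi_{i,j}.  The inner max is taken with
   default 0, which is harmless since psi >= 0 and n >= 2 (nonempty range). *)
Definition benchB (R : realDomainType) (n m : nat) (p : 'I_m -> R)
  (v : 'I_n -> 'I_m -> R) : R :=
  minlist [seq \sum_(j < m) \big[Num.max/0]_(i < n | i != i') psi p v i j
          | i' <- enum 'I_n].

(* Main.v *)
Require Import Defs.
From mathcomp Require Import all_boot all_order all_algebra.
Import Order.TTheory GRing.Theory Num.Theory.
Local Open Scope ring_scope.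

Lemma max2_ge (R : realDomainType) n (f : 'I_n -> R) c u v :
  u != v -> c <= f u -> c <= f v -> c <= max2 f.
Proof.
move=> uv cu cv; rewrite /max2.
set r := (fun x y : R => y <= x).
have tot : total r by move=> x y; rewrite /r orbC le_total.
have tr : transitive r by move=> x y z; rewrite /r => h1 h2; exact: le_trans h2 h1.
have Hs := sort_sorted tot [seq f i | i <- enum 'I_n].
have Hp : perm_eq (sort r [seq f i | i <- enum 'I_n]) [seq f i | i <- enum 'I_n] by rewrite perm_sort.
have Hc : (1 < count (fun x => (c <= x)%R) (sort r [seq f i | i <- enum 'I_n]))%N.
  rewrite (permP Hp) count_map.
  have -> : count (preim f (fun x => (c <= x)%R)) (enum 'I_n) = #|[pred i | c <= f i]|.
    rewrite cardE /enum_mem size_filter count_filter; apply: eq_count => x; by rewrite /= andbT.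
  apply/card_gt1P. exists u, v; by rewrite !inE cu cv uv.
move: Hs Hc; case: (sort r _) => [|x0 [|x1 t]] //=.
- by rewrite addn0; case: (c <= x0).
move=> /andP[_ Hpt] Hc; rewrite leNgt; apply/negP => x1c.
have Ha := order_path_min tr Hpt.
have Ht : count (fun x => (c <= x)%R) t = 0%N.
  apply/eqP; rewrite -leqn0 leqNgt -has_count; apply/hasP => [[y yt cy]].
  move/allP: Ha => /(_ y yt); rewrite /r => yx1.
  by move: (le_lt_trans (le_trans cy yx1) x1c); rewrite ltxx.
move: Hc; rewrite (leNgt c x1) x1c /= Ht; by case: leP.
Qed.

Section Helpers.
Variables (R : realDomainType) (I : finType) (P : pred I) (F : I -> R).

Lemma bigmax_ub i : P i -> F i <= \big[Num.max/0]_(i | P i) F i.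
Proof. by move=> Pi; rewrite (bigD1 i) //= le_max lexx. Qed.

Lemma bigmax_le c : 0 <= c -> (forall i, P i -> F i <= c) ->
  \big[Num.max/0]_(i | P i) F i <= c.
Proof.
move=> c0 H; apply: (big_ind (fun x => x <= c)) => //.
by move=> x y hx hy; rewrite ge_max hx hy.
Qed.

Lemma bigmax_ex : (exists i, P i) -> (forall i, P i -> 0 <= F i) ->
  exists2 c, P c & \big[Num.max/0]_(i | P i) F i <= F c.
Proof.
move=> [i0 Pi0] F0.
set X := \big[Num.max/0]_(i | P i) F i.
have : X = 0 \/ exists2 c, P c & X <= F c.
  apply: (big_ind (fun x => x = 0 \/ exists2 c, P c & x <= F c)); first by left.
    move=> x y hx hy; rewrite /Order.max; by case: ifP.
  by move=> i Pi; right; exists i.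
case=> [->|//]; by exists i0 => //; apply: F0.
Qed.

Lemma sum_ge_term (J : finType) (G : J -> R) j0 : (forall j, 0 <= G j) -> G j0 <= \sum_j G j.
Proof. by move=> G0; rewrite (bigD1 j0) //= lerDl sumr_ge0. Qed.
End Helpers.

Lemma minlist_le (R : realDomainType) (l : seq R) x : x \in l -> minlist l <= x.
Proof.
rewrite /minlist; move: (head 0 l) => d.
elim: l => [|y l IH] //; rewrite inE big_cons => /orP [/eqP ->|xl].
  by rewrite ge_min lexx.
by rewrite ge_min IH ?orbT.
Qed.

From mathcomp Require Import ring lra.

Lemma sum_ind (R : realDomainType) m (j : 'I_m) (C : R) :
  \sum_(a < m) (j == a)%:R * C = C.
Proof.
rewrite (bigD1 j) //= eqxx mul1r big1 ?addr0 // => a ja.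
by rewrite eq_sym (negbTE ja) mul0r.
Qed.

Theorem theorem2 (R : realFieldType) (n m : nat) (p : 'I_m -> R)
  (v : 'I_n -> 'I_m -> R) :
  (2 <= n)%N ->
  (forall j, 0 <= p j) -> \sum_(j < m) p j = 1 ->
  (forall i j, 0 <= v i j) ->
  exists (k : nat) (phi : 'I_m -> 'I_k -> R),
    is_scheme phi /\ benchB p v / 2 <= revenue p v phi.
Proof.
case: n v => [|[|n]] // v _ hp hp1 hv.
set ps := psi p v.
have ps0 : forall i j, 0 <= ps i j by move=> i j; rewrite /ps /psi mulr_ge0.
have exa : forall j, exists a, [forall i, ps i j <= ps a j].
  move=> j; have [|//|c _ hc] := @bigmax_ex _ _ predT (fun i => ps i j).
    by exists ord0.
  exists c; apply/forallP => i; apply: le_trans hc; exact: (@bigmax_ub _ _ predT (fun i => ps i j)).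
pose a j := xchoose (exa j).
have ha j i : ps i j <= ps (a j) j by move/forallP: (xchooseP (exa j)); apply.
pose M j := ps (a j) j.
pose X j i' := \big[Num.max/0]_(i | i != i') ps i j.
have XM j i' : X j i' <= M j by apply: bigmax_le => [|i _]; [apply: ps0|apply: ha].
have Xex j i' : exists2 c, c != i' & X j i' <= ps c j.
  apply: bigmax_ex => // ; exists (if i' == ord0 then ord_max else ord0).
  by case: (eqVneq i' ord0) => [->|h] //; rewrite eq_sym.
have BX i' : benchB p v <= \sum_j X j i'.
  by rewrite /benchB; apply: minlist_le; apply: map_f; rewrite mem_enum.
have M0 j : 0 <= M j by apply: ps0.
set W := \sum_j M j.
have W0 : 0 <= W by apply: sumr_ge0.
case: (eqVneq W 0) => [WW|Wn0].
- exists 1%N, (fun _ _ => 1); split.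
    by split => [j s|j]; rewrite ?big_ord1 ?ler01 ?lexx.
  rewrite /revenue big_ord1.
  have B0 : benchB p v <= 0.
    rewrite -WW; apply: le_trans (BX ord0) _; apply: ler_sum => j _; exact: XM.
  apply: (@le_trans _ _ 0); first lra.
  apply: (@max2_ge _ _ _ 0 ord0 ord_max) => //; apply: sumr_ge0 => j _; rewrite mulr1; exact: ps0.
have Wp : 0 < W by rewrite lt0r Wn0 W0.
pose w j := M j / (2 * W).
have w0 j : 0 <= w j by rewrite /w divr_ge0 // mulr_ge0.
have sw : \sum_j w j = 1 / 2.
  by rewrite /w -mulr_suml -/W; field; rewrite Wn0.
pose phi0 (j : 'I_m) (ab : 'I_m * 'I_m) := (j == ab.1)%:R * w ab.2 + (j == ab.2)%:R * w ab.1.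
have phi00 j ab : 0 <= phi0 j ab by rewrite /phi0 addr_ge0 // mulr_ge0.
have sumS : forall G : 'I_m * 'I_m -> R,
    \sum_(s < #|{: 'I_m * 'I_m}|) G (enum_val s) = \sum_ab G ab.
  move=> G; rewrite (reindex enum_rank).
    by apply: eq_bigr => ab _; rewrite enum_rankK.
  by exists enum_val => x _; [exact: enum_rankK | exact: enum_valK].
have sphi j : \sum_ab phi0 j ab = 1.
  rewrite -(pair_bigA _ (fun a b => phi0 j (a, b))) /phi0 /=.
  under eq_bigr => a0 _ do rewrite big_split /= -mulr_sumr sum_ind.
  rewrite big_split /= sum_ind sw; lra.
exists #|{: 'I_m * 'I_m}|, (fun j s => phi0 j (enum_val s)); split.
  split => [j s|j]; last by rewrite sumS.
  rewrite phi00 /= -(sphi j); exact: (@sum_ge_term R _ (phi0 j) (enum_val s) (phi00 j)).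
rewrite /revenue (sumS (fun ab => max2 (fun i => \sum_j psi p v i j * phi0 j ab))).
apply: (@le_trans _ _ (\sum_(ab : 'I_m * 'I_m) w ab.2 * X ab.1 (a ab.2))).
  rewrite -(pair_bigA _ (fun x y => w y * X x (a y))) exchange_big /=.
  have -> : benchB p v / 2 = \sum_b w b * benchB p v.
    by rewrite -mulr_suml sw mul1r mulrC.
  apply: ler_sum => b _; rewrite -mulr_sumr. apply: ler_wpM2l; [exact: w0|exact: BX].
apply: ler_sum => [[x y]] _ /=.
have [c ca hc] := Xex x (a y).
have yge : forall i j0, ps i j0 * phi0 j0 (x, y) <= \sum_j ps i j * phi0 j (x, y).
  move=> i j0; apply: (@sum_ge_term R _ (fun j => ps i j * phi0 j (x, y)) j0).
  by move=> j; rewrite mulr_ge0.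
have px : w y <= phi0 x (x, y) by rewrite /phi0 /= eqxx mul1r lerDl mulr_ge0.
have py : w x <= phi0 y (x, y) by rewrite /phi0 /= eqxx mul1r lerDr mulr_ge0.
apply: (@max2_ge _ _ _ _ (a y) c); first by rewrite eq_sym.
  apply: le_trans (yge (a y) y).
  apply: le_trans (ler_wpM2l (w0 y) (XM x (a y))) _.
  have -> : w y * M x = M y * w x by rewrite /w; field; rewrite Wn0.
  by apply: ler_wpM2l; [exact: M0|exact: py].
apply: le_trans (yge c x).
rewrite mulrC; apply: le_trans (ler_wpM2r (w0 y) hc) _.
by apply: ler_wpM2l; [exact: ps0|exact: px].
Qed.
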